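(* Let $S_{(1,1)}(x)=\sum_{p\ge1}\binom{2p}{p}x^{2p}$, $C^\bullet_{(1,1)}(x)=\sum_{n\ge1}\varphi(n)S_{(1,1)}(x^n)$ and $0<x<1/2$. Consider the procedure: draw $N\in\mathbb{N}^*$ with $\mathbb{P}(N=n)=\varphi(n)S_{(1,1)}(x^n)/C^\bullet_{(1,1)}(x)$; given $N=n$, draw a nonempty $(1,1)$-balanced word $w$ with probability $x^{n|w|}/S_{(1,1)}(x^n)$; output the necklace of $w^n$. Then each $(1,1)$-balanced necklace $c$ is output with probability $|c|\,x^{|c|}/C^\bullet_{(1,1)}(x)$; consequently, pointing the output at a uniformly random position in $\{1,\dots,|c|\}$ yields a Boltzmann sampler with parameter $x$ for $\Theta Cyc_{(1,1)}$. *)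

(* Defs.v *)
From Stdlib Require Import Reals List Arith Bool ClassicalEpsilon.
Import ListNotations.
Open Scope R_scope.

Definition series_value (f : nat -> R) : R :=
  epsilon (inhabits 0%R) (fun l => infinite_sum f l).

Definition S11 (x : R) : R :=
  series_value (fun p => C (2 * S p) (S p) * x ^ (2 * S p)).

Definition phi (n : nat) : nat :=
  length (filter (fun k => Nat.eqb (Nat.gcd k n) 1) (seq 1 n)).

Definition Cbullet (x : R) : R :=
  series_value (fun n => INR (phi (S n)) * S11 (x ^ S n)).

(* Words over the alphabet {a,b}, encoded as {true,false}. *)
Definition word := list bool.

Fixpoint words (k : nat) : list word :=
  match k with
  | O => [ [] ]
  | S k' => flat_map (fun w => [true :: w; false :: w]) (words k')
  end.

Definition nb (b : bool) (w : word) : nat :=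
  length (filter (fun y => Bool.eqb y b) w).

Definition balancedb (w : word) : bool :=
  negb (Nat.eqb (length w) 0) && Nat.eqb (nb true w) (nb false w).

Definition rotb (u v : word) : bool :=
  existsb (fun k => if list_eq_dec Bool.bool_dec (skipn k u ++ firstn k u) v
                    then true else false)
          (seq 0 (S (length u))).

Definition wpow (w : word) (n : nat) : word := concat (repeat w n).

Definition P_N (x : R) (n : nat) : R :=
  INR (phi n) * S11 (x ^ n) / Cbullet x.

(* Only words of length <= |c|
   can contribute, so the sum is restricted to them. *)
Definition cond_prob (x : R) (n : nat) (c : word) : R :=
  fold_right Rplus 0
    (map (fun w => x ^ (n * length w) / S11 (x ^ n))
         (filter (fun w => balancedb w && rotb (wpow w n) c)
                 (flat_map words (seq 1 (length c))))).

(* Main.v *)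
Require Import Defs.
From Stdlib Require Import Reals List.
Open Scope R_scope.
Module MC.
From mathcomp Require Import all_boot cyclic.
Set Implicit Arguments. Unset Strict Implicit.
Local Open Scope nat_scope.

Lemma lenE (T : Type) (l : list T) : length l = size l.
Proof. by elim: l => //= a l ->. Qed.
Lemma filterE (T : Type) (p : T -> bool) (l : list T) : List.filter p l = filter p l.
Proof. by elim: l => //= a l ->. Qed.
Lemma appE (T : Type) (l1 l2 : list T) : List.app l1 l2 = cat l1 l2.
Proof. by elim: l1 => //= a l ->. Qed.
Lemma mapE (T U : Type) (f : T -> U) (l : list T) : List.map f l = map f l.
Proof. by elim: l => //= a l ->. Qed.
Lemma flat_mapE (T U : Type) (f : T -> list U) (l : list T) :
  flat_map f l = flatten (map f l).
Proof. by elim: l => //= a l ->; rewrite appE. Qed.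
Lemma seqE a n : List.seq a n = iota a n.
Proof. by elim: n a => //= n IH a; rewrite IH. Qed.
Lemma skipnE (T : Type) k (l : list T) : skipn k l = drop k l.
Proof. by elim: k l => [|k IH] [|a l] //=. Qed.
Lemma firstnE (T : Type) k (l : list T) : firstn k l = take k l.
Proof. by elim: k l => [|k IH] [|a l] //=; rewrite IH. Qed.
Lemma existsbE (T : Type) (p : T -> bool) l : List.existsb p l = has p l.
Proof. by elim: l => //= a l ->. Qed.
Lemma concatE (T : Type) (l : list (list T)) : concat l = flatten l.
Proof. by elim: l => //= a l ->; rewrite appE. Qed.
Lemma repeatE (T : Type) (x : T) n : repeat x n = nseq n x.
Proof. by elim: n => //= n ->. Qed.

Definition pw (w : seq bool) n := flatten (nseq n w).
Lemma wpowE w n : wpow w n = pw w n.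
Proof. by rewrite /wpow concatE repeatE. Qed.

Lemma rotbE u v : rotb u v = has (fun k => rot k u == v) (iota 0 (size u).+1).
Proof.
rewrite /rotb existsbE seqE lenE; apply: eq_has => k.
rewrite skipnE firstnE appE.
by case: list_eq_dec => [e|ne]; rewrite /rot; [rewrite e eqxx | apply/esym/eqP].
Qed.

Lemma rotbP u v : reflect (exists k, rot k u = v) (rotb u v).
Proof.
rewrite rotbE; apply: (iffP hasP) => [[k _ /eqP <-]|[k <-]]; first by exists k.
exists (minn k (size u)); first by rewrite mem_iota add0n ltnS geq_minr.
by rewrite -rot_minn.
Qed.

Lemma nbE b w : nb b w = count (fun y => Bool.eqb y b) w.
Proof. by rewrite /nb lenE filterE size_filter. Qed.


Lemma wordsS k : words k.+1 = [seq b :: w | w <- words k, b <- [:: true; false]].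
Proof. by rewrite /= flat_mapE. Qed.

Lemma mem_words k w : (w \in words k) = (size w == k).
Proof.
elim: k w => [|k IH] w; first by case: w.
rewrite wordsS; apply/allpairsPdep/idP => [[w' [b' [Hw Hb ->]]]|].
  by rewrite /= eqSS -IH.
case: w => // b w /= Hs; exists w, b; rewrite IH; split => //; by case: b.
Qed.

Lemma uniq_words k : uniq (words k).
Proof.
elim: k => // k IH; rewrite wordsS; apply: allpairs_uniq => //.
by move=> [w1 b1] [w2 b2] _ _ [-> ->].
Qed.

Lemma mem_flat_words s w : (w \in flatten (map words s)) = (size w \in s).
Proof.
elim: s => //= a s IH; by rewrite mem_cat IH mem_words in_cons eq_sym.
Qed.

Lemma uniq_flat_words s : uniq s -> uniq (flatten (map words s)).
Proof.
elim: s => //= a s IH /andP [Ha Hs]; rewrite cat_uniq uniq_words IH // andbT.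
apply/hasPn => w; rewrite mem_flat_words => Hw; rewrite mem_words.
by apply/eqP => E; rewrite -E Hw in Ha.
Qed.


Lemma pwS w n : pw w n.+1 = w ++ pw w n. Proof. by []. Qed.
Lemma size_pw w n : size (pw w n) = n * size w.
Proof. by elim: n => //= n IH; rewrite pwS size_cat IH mulSn. Qed.
Lemma pw_comm w n : pw w n ++ w = w ++ pw w n.
Proof. by elim: n => [|n IH]; rewrite ?cats0 // pwS -catA IH. Qed.
Lemma rot_pw w n : rot (size w) (pw w n) = pw w n.
Proof. by case: n => // n; rewrite pwS rot_size_cat pw_comm. Qed.
Lemma take_pw w n : 0 < n -> take (size w) (pw w n) = w.
Proof. by case: n => // n _; rewrite pwS take_size_cat. Qed.
Lemma count_pw a w n : count a (pw w n) = n * count a w.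
Proof. by elim: n => //= n IH; rewrite pwS count_cat IH mulSn. Qed.

Lemma comm_pow k (r u : seq bool) :
  size r = k * size u -> r ++ u = u ++ r -> r = pw u k.
Proof.
elim: k r => [|k IH] r Hs Hc; first by case: r Hs Hc.
have Hle : size u <= size r by rewrite Hs mulSn leq_addr.
have Ht : take (size u) r = u.
  have := congr1 (take (size u)) Hc.
  by rewrite (take_size_cat _ (erefl (size u))) takel_cat.
have Er : r = u ++ drop (size u) r by rewrite -{1}(cat_take_drop (size u) r) Ht.
set r' := drop (size u) r in Er.
have Hs' : size r' = k * size u.
  by rewrite size_drop Hs mulSn addKn.
have Hc' : r' ++ u = u ++ r'.
  move: Hc; rewrite {1 2}Er -catA => /(congr1 (drop (size u))).
  by rewrite !drop_size_cat.
by rewrite Er (IH r' Hs' Hc').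
Qed.

Lemma periodic (v : seq bool) n m : 0 < n -> size v = n * m -> rot m v = v ->
  v = pw (take m v) n.
Proof.
case: n => // n _ Hs Hr.
have Hle : m <= size v by rewrite Hs mulSn leq_addr.
have Hsz : size (take m v) = m by rewrite size_takel.
rewrite pwS -(comm_pow (r := drop m v) (u := take m v) (k := n)).
- by rewrite cat_take_drop.
- by rewrite size_drop Hs Hsz mulSn addKn.
- by move: Hr; rewrite /rot cat_take_drop.
Qed.



Section Period.
Variable c : seq bool.
Hypothesis HL : 0 < size c.

Lemma ex_per : exists k, (0 < k) && (rot k c == c).
Proof. by exists (size c); rewrite HL rot_size eqxx. Qed.

Definition per := ex_minn ex_per.

Lemma per_spec : [/\ 0 < per, rot per c = c &
   forall k, 0 < k -> rot k c = c -> per <= k].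
Proof.
rewrite /per; case: ex_minnP => d /andP [Hd /eqP Hr] Hmin; split => //.
by move=> k Hk Hrk; apply: Hmin; rewrite Hk Hrk eqxx.
Qed.

Lemma per_gt0 : 0 < per. Proof. by case: per_spec. Qed.
Lemma rot_per : rot per c = c. Proof. by case: per_spec. Qed.
Lemma per_min k : 0 < k -> rot k c = c -> per <= k.
Proof. by case: per_spec => _ _; apply. Qed.

Lemma rot_mulper q : q * per <= size c -> rot (q * per) c = c.
Proof.
elim: q => [|q IH] H; first by rewrite rot0.
rewrite mulSn rotD // IH ?rot_per //.
by apply: leq_trans H; rewrite mulSn leq_addl.
Qed.

Lemma rot_modper j : j <= size c -> rot j c = rot (j %% per) c.
Proof.
move=> Hj; have E := divn_eq j per.
have H1 : j %/ per * per <= size c by apply: leq_trans Hj; rewrite {2}E leq_addr.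
rewrite {1}E addnC rotD; last by rewrite addnC -E.
by rewrite rot_mulper.
Qed.

Lemma rotc_eq k : k <= size c -> (rot k c == c) = (per %| k).
Proof.
move=> Hk; apply/eqP/idP => [Hr|/dvdnP [q Eq]]; last by rewrite Eq rot_mulper // -Eq.
case: (posnP (k %% per)) => [Hz|Hm]; first by rewrite /dvdn Hz.
have := per_min Hm; rewrite -rot_modper // => /(_ Hr).
by rewrite leqNgt ltn_pmod // per_gt0.
Qed.

Lemma per_dvd : per %| size c.
Proof. by rewrite -rotc_eq // rot_size. Qed.

Lemma per_le : per <= size c.
Proof. by apply: dvdn_leq per_dvd. Qed.

Lemma rot_inj_per k k' : k < per -> k' < per -> rot k c = rot k' c -> k = k'.
Proof.
wlog le : k k' / k <= k'.
  move=> W Hk Hk' E; case: (leqP k k') => H; first exact: W.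
  by apply/esym/W => //; apply: ltnW.
move=> Hk Hk' E; apply/eqP; rewrite eqn_leq le /=; apply/negP => /negP.
rewrite -ltnNge => lt.
have Hle' : k' <= size c by apply: leq_trans (ltnW Hk') per_le.
have : rot (k' - k) c = c.
  apply: (@rot_inj k); rewrite rot_rot -rotD; last by rewrite subnK.
  by rewrite subnK // E.
move/(per_min (k := k' - k)); rewrite subn_gt0 => /(_ lt).
by rewrite leqNgt (leq_ltn_trans (leq_subr _ _) Hk').
Qed.

End Period.


Lemma balancedbE w : balancedb w = (0 < size w) && (nb true w == nb false w).
Proof.
rewrite /balancedb lenE.
case: (PeanoNat.Nat.eqb_spec (size w) 0) => [->|H] //=.
rewrite lt0n; have -> : (size w != 0) by apply/eqP.
by case: (PeanoNat.Nat.eqb_spec (nb true w) (nb false w)) => [->|H'];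
  [rewrite eqxx | apply/esym/eqP].
Qed.

Section Char.
Variable c : seq bool.
Hypothesis HL : 0 < size c.
Hypothesis Hbal : nb true c = nb false c.
Variable n : nat.
Hypothesis Hn : 0 < n.

Local Notation L := (size c).
Local Notation d := (per HL).
Local Notation m := (L %/ n).
Definition cond := (n * d %| L).
Definition Tset := [seq take m (rot k c) | k <- iota 0 d].
Definition Qp w := balancedb w && rotb (pw w n) c.
Definition Sset := flatten (map words (iota 1 L)).

Lemma char w : (w \in Sset) && Qp w = cond && (w \in Tset).
Proof.
rewrite /Sset /Tset mem_flat_words mem_iota add1n ltnS /Qp /cond.
apply/idP/idP.
- case/andP=> [/andP [Hw0 HwL] /andP [_ /rotbP [j Hj]]].
  set s := size w in Hw0 HwL.
  have EL : L = n * s by rewrite -Hj size_rot size_pw.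
  have Hm : m = s by rewrite EL mulKn.
  have Hp : pw w n = rot (L - j) c by rewrite -{1}(rotK j (pw w n)) Hj.

  have Hi : L - j <= L by apply: leq_subr.
  have Hs : rot s c = c.
    apply: (@rot_inj (L - j)); rewrite rot_rot -Hp.
    by rewrite /s rot_pw.
  have Hds : d %| s by rewrite -rotc_eq // Hs.
  rewrite {1}EL dvdn_pmul2l // Hds /=; apply/mapP; exists ((L - j) %% d).
    by rewrite mem_iota add0n ltn_pmod // per_gt0.
  by rewrite Hm -rot_modper // -Hp take_pw.
- case/andP=> [Hc /mapP [k]]; rewrite mem_iota add0n => Hk ->.
  have Hnd : n %| L by apply: dvdn_trans Hc; apply: dvdn_mulr.
  have EL : L = n * m by rewrite mulnC divnK.
  have Hdm : d %| m by rewrite -(dvdn_pmul2l Hn) -EL.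
  have HmL : m <= L by rewrite {2}EL leq_pmull.
  have Hm0 : 0 < m by have := HL; rewrite {1}EL muln_gt0 => /andP [].

  have Hkl : k <= L by apply: leq_trans (ltnW Hk) (per_le HL).
  have Hrm : rot m c = c by apply/eqP; rewrite rotc_eq.
  have Hv : rot k c = pw (take m (rot k c)) n.
    by apply: periodic => //; rewrite ?size_rot // rot_rot Hrm.
  have Hsz : size (take m (rot k c)) = m by rewrite size_takel ?size_rot.
  rewrite Hsz Hm0 HmL /= balancedbE Hsz Hm0 /=; apply/andP; split.
    rewrite -(eqn_pmul2l Hn) !nbE -!count_pw -Hv -!nbE.
    have Hpr : perm_eq (rot k c) c by rewrite perm_rot perm_refl.
    by rewrite !nbE !(permP Hpr) -!nbE Hbal.
  apply/rotbP; exists (L - k); rewrite -Hv; have := rotK k c; by rewrite /rotr size_rot.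
Qed.


Lemma uniq_T : cond -> uniq Tset.
Proof.
move=> Hc; rewrite /Tset map_inj_in_uniq ?iota_uniq //.
move=> k k'; rewrite !mem_iota !add0n => Hk Hk' E.
have Hnd : n %| L by apply: dvdn_trans Hc; apply: dvdn_mulr.
have EL : L = n * m by rewrite mulnC divnK.
have Hdm : d %| m by rewrite -(dvdn_pmul2l Hn) -EL.
have HmL : m <= L by rewrite {2}EL leq_pmull.
have Hrm : rot m c = c by apply/eqP; rewrite rotc_eq.
have Hv : forall k, rot k c = pw (take m (rot k c)) n.
  by move=> i; apply: periodic => //; rewrite ?size_rot // rot_rot Hrm.
by apply: (rot_inj_per (HL := HL)) => //; rewrite Hv E -Hv.
Qed.

Lemma count_Q : size (filter Qp Sset) = if cond then d else 0.
Proof.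
case: ifP => Hc.
  have Hp : perm_eq (filter Qp Sset) Tset.
    apply: uniq_perm; first by rewrite filter_uniq // uniq_flat_words // iota_uniq.
      exact: uniq_T.
    by move=> w; rewrite mem_filter andbC char Hc.
  by rewrite (perm_size Hp) size_map size_iota.
rewrite size_filter; apply/eqP; rewrite eqn0Ngt -has_count; apply/hasPn => w Hw.
by apply/negP => Hq; have := char w; rewrite Hw Hq Hc.
Qed.

End Char.


Lemma dividesP a b : PeanoNat.Nat.divide a b <-> a %| b.
Proof.
split => [[z ->]|/dvdnP [z ->]]; first by rewrite dvdn_mull.
by exists z.
Qed.

Lemma gcdE a b : PeanoNat.Nat.gcd a b = gcdn a b.
Proof.
apply/eqP; rewrite eqn_dvd; apply/andP; split.
  rewrite dvdn_gcd; apply/andP; split; apply/dividesP.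
    exact: PeanoNat.Nat.gcd_divide_l.
  exact: PeanoNat.Nat.gcd_divide_r.
apply/dividesP; apply: PeanoNat.Nat.gcd_greatest; apply/dividesP.
  exact: dvdn_gcdl.
exact: dvdn_gcdr.
Qed.

Lemma sum_count (s : seq nat) (a : pred nat) : \sum_(i <- s) a i = count a s.
Proof. by elim: s => [|x s IH]; rewrite ?big_nil ?big_cons ?IH. Qed.

Lemma phiE n : phi n = totient n.
Proof.
rewrite /phi lenE filterE seqE size_filter totient_count_coprime.
rewrite /index_iota subn0 sum_count.
have -> : count (fun k => PeanoNat.Nat.eqb (PeanoNat.Nat.gcd k n) 1) (iota 1 n)
        = count (fun k => coprime k n) (iota 1 n).
  apply: eq_count => k; rewrite gcdE /coprime.
  by case: (PeanoNat.Nat.eqb_spec (gcdn k n) 1) => [->|H]; [rewrite eqxx|apply/esym/eqP].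
case: n => // n.
have -> : iota 1 n.+1 = iota 1 n ++ [:: n.+1] by have := iotaD 1 n 1; rewrite addn1 add1n.
rewrite count_cat /= /coprime gcdnn gcdn0 addn0 addnC.
congr (_ + _); apply: eq_count => k; by rewrite /= gcdnC.
Qed.


Lemma total c (HL : 0 < size c) (Hbal : nb true c = nb false c) :
  \sum_(0 <= k < size c) phi k.+1 * size (filter (Qp c k.+1) (Sset c)) = size c.
Proof.
set d := per HL.
have Hd : 0 < d := per_gt0 HL.
set M := size c %/ d.
have EL : size c = M * d by rewrite divnK // per_dvd.
have HM : 0 < M by have := HL; rewrite {1}EL muln_gt0 => /andP [].
have HML : M <= size c by rewrite EL leq_pmulr.
transitivity (\sum_(0 <= k < size c) ((k.+1 %| M) * totient k.+1) * d).
  apply: eq_bigr => k _; rewrite (count_Q HL Hbal (ltn0Sn k)) phiE /cond -/d.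
  rewrite {1}EL dvdn_pmul2r //; by case: (k.+1 %| M); rewrite ?muln0 ?mul1n.
rewrite -big_distrl /= [RHS]EL; congr (_ * _).
have -> : \sum_(0 <= i < size c) (i.+1 %| M) * totient i.+1
        = \sum_(0 <= i < (size c).+1) (i %| M) * totient i.
  rewrite big_nat_recl // dvd0n.
  by case: eqP => [E|_]; [rewrite E in HM | rewrite mul0n add0n].
rewrite (big_cat_nat _ (n := M.+1)) //= -?ltnS //.
rewrite [X in _ + X]big1_seq ?addn0; last first.
  move=> i /andP [_]; rewrite mem_index_iota => /andP [Hi _].
  rewrite (_ : i %| M = false) //; apply/negbTE; apply: contraTN Hi => /(dvdn_leq HM) H; by rewrite -leqNgt.
rewrite big_mkord -[RHS](sum_totient_dvd M) [RHS]big_mkcond /=.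
by apply: eq_bigr => i _; case: (nat_of_ord i %| M); rewrite ?mul1n.
Qed.


Definition cnt c n := length (List.filter (fun w => balancedb w && rotb (wpow w n) c)
                              (flat_map words (List.seq 1 (length c)))).

Lemma cntE c n : cnt c n = size (filter (Qp c n) (Sset c)).
Proof.
rewrite /cnt lenE filterE flat_mapE seqE lenE /Sset.
by congr size; apply: eq_filter => w; rewrite /Qp wpowE.
Qed.

Lemma len_pos c : balancedb c = true -> (0 < length c)%coq_nat.
Proof. by rewrite balancedbE lenE => /andP [/ltP H _]. Qed.

Lemma cnt_elem c n w :
  List.In w (List.filter (fun w => balancedb w && rotb (wpow w n) c)
                              (flat_map words (List.seq 1 (length c)))) ->
  (n * length w = length c)%coq_nat /\ (0 < length w)%coq_nat.
Proof.
case/List.filter_In => _ /andP [Hb /rotbP [j Hj]].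
rewrite !lenE multE -Hj size_rot wpowE size_pw; split => //.
by move: Hb; rewrite balancedbE => /andP [/ltP H _].
Qed.

Lemma sumR (f : nat -> nat) N :
  sum_f_R0 (fun k => INR (f k)) N = INR (\sum_(0 <= k < N.+1) f k).
Proof.
elim: N => [|N IH]; first by rewrite big_nat1.
rewrite tech5 IH (@big_nat_recr _ _ _ N.+1) //=; symmetry; exact: plus_INR.
Qed.

Lemma total_R c : balancedb c = true ->
  sum_f_R0 (fun k => INR (Nat.mul (phi (S k)) (cnt c (S k)))) (Nat.sub (length c) 1)
  = INR (length c).
Proof.
move=> hc; have := hc; rewrite balancedbE => /andP [HL /eqP Hbal].
rewrite sumR minusE lenE subn1 prednK //.
congr INR; rewrite -[RHS](total HL Hbal); apply: eq_bigr => k _.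
by rewrite cntE multE.
Qed.

End MC.

From Stdlib Require Import Lra Lia ClassicalEpsilon.
Open Scope R_scope.

Lemma series_value_eq f l : infinite_sum f l -> series_value f = l.
Proof.
  intro H. unfold series_value.
  apply (uniqueness_sum f); [ | exact H].
  apply epsilon_spec. exists l. exact H.
Qed.

Lemma C_pos n k : 0 < C n k.
Proof.
  unfold C. apply Rdiv_lt_0_compat; [apply INR_fact_lt_0|].
  apply Rmult_lt_0_compat; apply INR_fact_lt_0.
Qed.

Lemma sum_ge_term (f : nat -> R) N k :
  (forall i, 0 <= f i) -> (k <= N)%nat -> f k <= sum_f_R0 f N.
Proof.
  intros Hf. induction N as [|N IH]; intros Hk.
  - assert (k = 0%nat) by lia. subst. simpl. lra.
  - rewrite tech5. destruct (Nat.eq_dec k (S N)) as [->|Hne].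
    + pose proof (cond_pos_sum f N Hf). lra.
    + assert (k <= N)%nat by lia. specialize (IH H). pose proof (Hf (S N)). lra.
Qed.

Lemma C_le n k : (k <= n)%nat -> C n k <= 2 ^ n.
Proof.
  intro Hk. replace (2 ^ n) with ((1 + 1) ^ n) by (f_equal; lra).
  rewrite binomial.
  replace (C n k) with (C n k * 1 ^ k * 1 ^ (n - k)) by (rewrite !pow1; ring).
  apply (sum_ge_term (fun i => C n i * 1 ^ i * 1 ^ (n - i))); [|exact Hk].
  intro i. rewrite !pow1. pose proof (C_pos n i). lra.
Qed.

Lemma S11_pos y : 0 < y < 1/2 -> 0 < S11 y.
Proof.
  intros [Hy0 Hy1].
  set (g := fun p => C (2 * S p) (S p) * y ^ (2 * S p)).
  set (q := 4 * y ^ 2).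
  assert (Hq0 : 0 <= q) by (unfold q; nra).
  assert (Hq1 : q < 1) by (unfold q; nra).
  assert (Hg : forall p, 0 <= g p <= 1 * q ^ p).
  { intro p. unfold g. split.
    - apply Rmult_le_pos; [apply Rlt_le, C_pos | apply pow_le; lra].
    - apply Rle_trans with (2 ^ (2 * S p) * y ^ (2 * S p)).
      + apply Rmult_le_compat_r; [apply pow_le; lra|]. apply C_le. lia.
      + rewrite <- Rpow_mult_distr, pow_mult.
        replace ((2 * y) ^ 2) with q by (unfold q; ring).
        simpl. pose proof (pow_le q p Hq0). nra. }
  assert (Hgeo : {l | Un_cv (fun N => sum_f_R0 (fun p => 1 * q ^ p) N) l}).
  { exists (/ (1 - q)). apply GP_infinite. rewrite Rabs_right; lra. }
  destruct (Rseries_CV_comp g _ Hg Hgeo) as [l Hl].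
  unfold S11. fold g. rewrite (series_value_eq g l Hl).
  apply Rlt_le_trans with (sum_f_R0 g 0).
  - simpl. unfold g. apply Rmult_lt_0_compat; [apply C_pos | apply pow_lt; lra].
  - apply (growing_ineq _ l); [|exact Hl].
    intro n. rewrite tech5. pose proof (Hg (S n)). lra.
Qed.

Lemma fold_const (g : word -> R) a l :
  (forall w, In w l -> g w = a) -> fold_right Rplus 0 (map g l) = INR (length l) * a.
Proof.
  induction l as [|w l IH]; intro H; cbn [fold_right map length]; [simpl; ring|].
  rewrite (H w (or_introl eq_refl)), IH by (intros; apply H; right; assumption).
  rewrite S_INR. ring.
Qed.

Lemma pow_le_one y k : 0 <= y <= 1 -> y ^ k <= 1.
Proof. intros Hy. induction k as [|k IH]; simpl; nra. Qed.

Lemma fin_sum (f : nat -> R) L l : (1 <= L)%nat -> (forall k, (L <= k)%nat -> f k = 0) ->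
  sum_f_R0 f (L - 1) = l -> infinite_sum f l.
Proof.
  intros HL Hz Hs eps Heps. exists (L - 1)%nat. intros n Hn.
  assert (E : forall p, sum_f_R0 f (L - 1 + p) = sum_f_R0 f (L - 1)).
  { induction p as [|p IH]; [rewrite Nat.add_0_r; reflexivity|].
    rewrite <- plus_n_Sm, tech5, IH, Hz by lia. ring. }
  replace n with (L - 1 + (n - (L - 1)))%nat by lia.
  rewrite E, Hs. unfold R_dist. rewrite Rminus_diag, Rabs_R0. lra.
Qed.

Lemma cnt_zero c k : (length c <= k)%nat -> MC.cnt c (S k) = 0%nat.
Proof.
  intro H. unfold MC.cnt.
  destruct (List.filter _ _) as [|w l] eqn:E; [reflexivity|].
  exfalso. assert (Hin : In w (w :: l)) by (left; reflexivity).
  rewrite <- E in Hin. apply MC.cnt_elem in Hin. nia.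
Qed.

Lemma term_eq x (hx : 0 < x < 1/2) c k :
  P_N x (S k) * cond_prob x (S k) c =
  INR (Nat.mul (phi (S k)) (MC.cnt c (S k))) * (x ^ length c * / Cbullet x).
Proof.
  unfold P_N, cond_prob.
  rewrite (fold_const _ (x ^ length c / S11 (x ^ S k))).
  2:{ intros w Hw. apply MC.cnt_elem in Hw. destruct Hw as [Hw _]. rewrite Hw. reflexivity. }
  unfold MC.cnt.
  assert (Hs : 0 < S11 (x ^ S k)).
  { apply S11_pos. split; [apply pow_lt; lra|].
    simpl. pose proof (pow_le_one x k ltac:(lra)). pose proof (pow_lt x k ltac:(lra)). nra. }
  unfold Rdiv. rewrite mult_INR. generalize (/ Cbullet x). intro ic. field. lra.
Qed.

Theorem mainTheorem5 (x : R) (hx : 0 < x < 1/2) (c : word)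
  (hc : balancedb c = true) :
  infinite_sum (fun k => P_N x (S k) * cond_prob x (S k) c)
               (INR (length c) * x ^ length c / Cbullet x)
  /\
  (forall i : nat, (1 <= i <= length c)%nat ->
     infinite_sum (fun k => P_N x (S k) * cond_prob x (S k) c / INR (length c))
                  (x ^ length c / Cbullet x)).
Proof.
  pose proof (MC.len_pos hc) as HL.
  pose proof (MC.total_R hc) as HT.
  split.
  - apply fin_sum with (L := length c); [lia| |].
    + intros k Hk. rewrite term_eq by assumption; rewrite cnt_zero by lia. rewrite Nat.mul_0_r. simpl. ring.
    + rewrite (sum_eq _ (fun k => INR (Nat.mul (phi (S k)) (MC.cnt c (S k))) *
                                   (x ^ length c * / Cbullet x))).
      2:{ intros. apply term_eq; assumption. }
      rewrite <- scal_sum, HT. unfold Rdiv. ring.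
  - intros i Hi. apply fin_sum with (L := length c); [lia| |].
    + intros k Hk. rewrite term_eq by assumption; rewrite cnt_zero by lia. rewrite Nat.mul_0_r. simpl.
      unfold Rdiv. ring.
    + rewrite (sum_eq _ (fun k => INR (Nat.mul (phi (S k)) (MC.cnt c (S k))) *
                                   (x ^ length c * / Cbullet x / INR (length c)))).
      2:{ intros. rewrite term_eq by assumption. unfold Rdiv. ring. }
      rewrite <- scal_sum, HT. unfold Rdiv. generalize (/ Cbullet x). intro ic.
      field. apply not_0_INR. lia.
Qed.
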